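(* Let $p>q>0$ be relatively prime integers with Hirzebruch–Jung continued fraction expansion \[ \frac{p}{q} = [a_1,\ldots,a_n] = a_1 - \cfrac{1}{a_2 - \cfrac{1}{\ddots - \cfrac{1}{a_n}}}, \qquad a_i\geq 2. \] Then $\prod_{i=1}^n (a_i-1) \leq p$. Moreover, the inequality still holds if one (but not both) of the factors $a_1-1$ and $a_n-1$ is replaced by $a_1$ or $a_n$ respectively.
   Context: The Hirzebruch–Jung expansion is computed recursively: $p_1/q_1=p/q$, $p_i/q_i = a_i - q_{i+1}/p_{i+1}$ with $p_{i+1}=q_i$ and $0<q_{i+1}<p_{i+1}$, terminating when $q_n=1$. *)

(* Defs.v *)
From mathcomp Require Import all_boot all_order all_algebra.
Set Implicit Arguments. Unset Strict Implicit. Unset Printing Implicit Defensive.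
Import Order.TTheory GRing.Theory Num.Theory.
Local Open Scope ring_scope.

Fixpoint hjval (s : seq nat) : rat :=
  match s with
  | [::] => 0
  | [:: a] => a%:R
  | a :: t => a%:R - (hjval t)^-1
  end.

(* Main.v *)
Require Import Defs.
From mathcomp Require Import all_boot all_order all_algebra.
From mathcomp Require Import zify ring lra.
Import Order.TTheory GRing.Theory Num.Theory.

Fixpoint hj (s : seq nat) : nat * nat :=
  match s with
  | [::] => (1, 0)%N
  | a :: t => if t is [::] then (a, 1)%N else (a * (hj t).1 - (hj t).2, (hj t).1)%N
  end.

Lemma hj_cons a t : t != [::] ->
  hj (a :: t) = (a * (hj t).1 - (hj t).2, (hj t).1)%N.
Proof. by case: t. Qed.

Lemma hjval_cons a t : t != [::] -> hjval (a :: t) = (a%:R - (hjval t)^-1)%R.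
Proof. by case: t. Qed.

Lemma coprime_step a n d : (0 < a)%N -> (d <= n)%N -> coprime n d ->
  coprime (a * n - d) n.
Proof.
move=> a0 dn cnd.
have -> : (a * n - d = (a - 1) * n + (n - d))%N by nia.
rewrite /coprime gcdnC gcdnMDl.
have -> : n = ((n - d) + d)%N by lia.
rewrite addnK.
have -> : gcdn ((n - d) + d) (n - d) = gcdn (n - d) (1 * (n - d) + d) by rewrite mul1n gcdnC.
rewrite gcdnMDl.
move: cnd; have {1}-> : n = (1 * d + (n - d))%N by lia.
by rewrite /coprime gcdnC gcdnMDl gcdnC.
Qed.

Lemma prod_pos (r : seq nat) : all (fun x => 2 <= x)%N r -> (0 < \prod_(x <- r) (x - 1))%N.
Proof.
elim: r => [|y r IHr]; first by rewrite big_nil.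
rewrite big_cons /= => /andP[y2 H]; have := IHr H; rewrite muln_gt0 => ->; rewrite andbT; lia.
Qed.

Lemma hj_props s : s != [::] -> all (fun x => 2 <= x)%N s ->
  (0 < (hj s).2)%N /\ [/\
      (\prod_(x <- s) (x - 1) + (hj s).2 <= (hj s).1)%N,
      coprime (hj s).1 (hj s).2,
      hjval s = (((hj s).1)%:R / ((hj s).2)%:R)%R :> rat,
      (head 0%N s * \prod_(x <- behead s) (x - 1) <= (hj s).1)%N
    & ((\prod_(x <- take (size s).-1 s) (x - 1)) * last 0%N s <= (hj s).1)%N].
Proof.
elim: s => [//|a t IH] _.
case: t IH => [|b t] IH.
  rewrite /= big_cons big_nil /= => /andP[a2 _].
  split => //; split; rewrite ?coprimen1 ?divr1 ?big_nil ?muln1 ?mul1n //; lia.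
move=> /andP[a2 Hall].
have [d0 [Hp cop hv hh hl]] := IH isT Hall.
set N := (hj (b :: t)).1 in Hp cop hv hh hl *.
set D := (hj (b :: t)).2 in d0 Hp cop hv hh hl *.
set P := \prod_(x <- b :: t) (x - 1) in Hp hh.
have P1 : (0 < P)%N by exact: prod_pos.
rewrite (@hj_cons a (b :: t)) // (@hjval_cons a (b :: t)) // hv.
rewrite -/N -/D.
have EP : (\prod_(x <- [:: a, b & t]) (x-1) = (a-1) * P)%N by rewrite big_cons.
have EP2 : (\prod_(x <- b :: t) (x-1) = P)%N by [].
clearbody N D P.
rewrite /=.
split; first by lia.
split => //.
- rewrite EP.
  have h1 : ((a-1) * (P + D) <= (a-1) * N)%N by rewrite leq_mul2l Hp orbT.
  nia.
- by apply: coprime_step => //; lia.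
- rewrite invf_div natrB; last by nia.
  rewrite natrM; field.
  by rewrite pnatr_eq0 -lt0n; lia.
- rewrite EP2.
  have h1 : (a * (P + D) <= a * N)%N by rewrite leq_mul2l Hp orbT.
  nia.
- move: hl; rewrite /= big_cons.
  set L := last b t; set Q := \prod_(x <- _) _ => hl.
  rewrite -mulnA; nia.
Qed.

Theorem mainTheorem7 (p q : nat) (a : seq nat) :
  (0 < q)%N -> (q < p)%N -> coprime p q ->
  a != [::] -> all (fun x => 2 <= x)%N a ->
  hjval a = (p%:R / q%:R)%R ->
  [/\ (\prod_(x <- a) (x - 1) <= p)%N,
      (head 0%N a * \prod_(x <- behead a) (x - 1) <= p)%N
    & ((\prod_(x <- take (size a).-1 a) (x - 1)) * last 0%N a <= p)%N].
Proof.
move=> q0 qp cpq an0 Hall Hv.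
have [d0 [Hp cop hv hh hl]] := @hj_props a an0 Hall.
set N := (hj a).1 in Hp cop hv hh hl.
set D := (hj a).2 in d0 Hp cop hv hh hl.
have E : (p * D = q * N)%N.
  apply/eqP; rewrite -(eqr_nat rat) !natrM; apply/eqP.
  have Dn : (D%:R != 0 :> rat)%R by rewrite pnatr_eq0 -lt0n.
  have qn : (q%:R != 0 :> rat)%R by rewrite pnatr_eq0 -lt0n.
  move: Hv; rewrite hv => /eqP; rewrite eqr_div //.
  by move/eqP => H; rewrite -H mulrC.
have pN : (p %| N)%N.
  by rewrite -(Gauss_dvdr _ cpq) -E dvdn_mulr.
have Np : (N %| p)%N.
  by rewrite -(Gauss_dvdr _ cop) mulnC E dvdn_mull.
have -> : p = N by apply/eqP; rewrite eqn_dvd pN Np.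
clearbody N D; split => //; exact: leq_trans (leq_addr _ _) Hp.
Qed.
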